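(* For every complex $s$ with $\Re(s)>4$, \[\sum_{k=1}^\infty k^2\,\zeta(s,2k)=\tfrac{1}{24}\Big\{(3\cdot 2^{1-s}-1) \zeta(s-1)+6\cdot 2^{1-s} \zeta(s-2)+\zeta(s-3)\Big\}.\]
   Context: $\zeta(s,\alpha)=\sum_{n=0}^\infty (n+\alpha)^{-s}$ denotes the Hurwitz zeta function ($\Re(s)>1$, $\alpha>0$), and $\zeta(s)=\zeta(s,1)$ is the Riemann zeta function. *)

(* Defs.v *)
From Stdlib Require Import Reals.
From Coquelicot Require Import Coquelicot.

(* Principal complex power x^z for a real base x > 0:
   x^z = exp(z ln x) = e^{Re z ln x} (cos (Im z ln x) + i sin (Im z ln x)). *)
Definition cpow (x : R) (z : C) : C :=
  (exp (Re z * ln x) * cos (Im z * ln x), exp (Re z * ln x) * sin (Im z * ln x))%R.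

(* Hurwitz zeta  zeta(s,a) = sum_{n>=0} (n+a)^{-s}  (meaningful for Re s > 1, a > 0),
   taken componentwise as a series of complex numbers. *)
Definition hurwitz_zeta (s : C) (a : R) : C :=
  (Series (fun n => Re (cpow (INR n + a) (- s))),
   Series (fun n => Im (cpow (INR n + a) (- s)))).

Definition riemann_zeta (s : C) : C := hurwitz_zeta s 1.

(* Main.v *)
Require Import Defs.
From Stdlib Require Import Reals Lra Lia.
From Coquelicot Require Import Coquelicot.

Lemma sum_n_Re (a : nat -> C) n : Re (sum_n a n) = sum_n (fun k => Re (a k)) n.
Proof.
  induction n as [|n IH].
  - rewrite !sum_O. reflexivity.
  - rewrite !sum_Sn. simpl. rewrite <- IH. reflexivity.
Qed.

Lemma sum_n_Im (a : nat -> C) n : Im (sum_n a n) = sum_n (fun k => Im (a k)) n.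
Proof.
  induction n as [|n IH].
  - rewrite !sum_O. reflexivity.
  - rewrite !sum_Sn. simpl. rewrite <- IH. reflexivity.
Qed.

Lemma is_series_C (a : nat -> C) l :
  is_series a l <-> is_series (fun n => Re (a n)) (Re l) /\ is_series (fun n => Im (a n)) (Im l).
Proof.
  unfold is_series.
  pose proof (@filterlim_locally nat (NormedModule.UniformSpace _ C_NormedModule) eventually _ (sum_n a) l) as K.
  pose proof (@filterlim_locally nat R_UniformSpace eventually _ (sum_n (fun n => Re (a n))) (Re l)) as K1.
  pose proof (@filterlim_locally nat R_UniformSpace eventually _ (sum_n (fun n => Im (a n))) (Im l)) as K2.
  split.
  - intros H. pose proof (proj1 K H) as H0.
    split; [apply (proj2 K1) | apply (proj2 K2)]; intros eps; generalize (H0 eps); apply filter_imp;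
      intros n [H1 H2]; [rewrite <- sum_n_Re | rewrite <- sum_n_Im]; assumption.
  - intros [H1 H2]. pose proof (proj1 K1 H1) as H3. pose proof (proj1 K2 H2) as H4.
    apply (proj2 K). intros eps.
    generalize (filter_and _ _ (H3 eps) (H4 eps)).
    apply filter_imp. intros n [h1 h2]. rewrite <- sum_n_Re in h1. rewrite <- sum_n_Im in h2.
    split; assumption.
Qed.

Definition Sc (a : nat -> C) : C := (Series (fun n => Re (a n)), Series (fun n => Im (a n))).

Lemma Sc_unique (a : nat -> C) l : is_series a l -> Sc a = l.
Proof.
  intros H. apply is_series_C in H. destruct H as [H1 H2].
  unfold Sc. rewrite (is_series_unique _ _ H1), (is_series_unique _ _ H2).
  destruct l; reflexivity.
Qed.

Lemma Sc_correct (a : nat -> C) : ex_series a -> is_series a (Sc a).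
Proof.
  intros [l H]. rewrite (Sc_unique a l H). exact H.
Qed.

Lemma Sc_ext (a b : nat -> C) : (forall n, a n = b n) -> Sc a = Sc b.
Proof.
  intros H. unfold Sc. f_equal; apply Series_ext; intros n; rewrite H; reflexivity.
Qed.

Lemma Cmod_le_sum (z : C) : Cmod z <= Rabs (Re z) + Rabs (Im z).
Proof.
  destruct z as [x y]. unfold Cmod, Re, Im; cbn [fst snd].
  rewrite <- (sqrt_pow2 (Rabs x + Rabs y)) by (pose proof (Rabs_pos x); pose proof (Rabs_pos y); lra).
  apply sqrt_le_1_alt.
  pose proof (Rabs_pos x); pose proof (Rabs_pos y).
  rewrite <- (pow2_abs x), <- (pow2_abs y). nra.
Qed.

Lemma im_le_Cmod (z : C) : Rabs (Im z) <= Cmod z.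
Proof.
  destruct z as [x y]. unfold Cmod, Re, Im; cbn [fst snd].
  rewrite <- (sqrt_pow2 (Rabs y)) by apply Rabs_pos.
  apply sqrt_le_1_alt. rewrite pow2_abs. nra.
Qed.

Lemma Cmod_Sc (a : nat -> C) : ex_series (fun n => Cmod (a n)) ->
  Cmod (Sc a) <= 2 * Series (fun n => Cmod (a n)).
Proof.
  intros H.
  assert (HR : ex_series (fun n => Rabs (Re (a n)))).
  { apply (ex_series_le (V:=R_CompleteNormedModule) _ (fun n => Cmod (a n))); [|exact H].
    intros n. change (norm (Rabs (Re (a n)))) with (Rabs (Rabs (Re (a n)))).
    rewrite Rabs_Rabsolu. apply re_le_Cmod. }
  assert (HI : ex_series (fun n => Rabs (Im (a n)))).
  { apply (ex_series_le (V:=R_CompleteNormedModule) _ (fun n => Cmod (a n))); [|exact H].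
    intros n. change (norm (Rabs (Im (a n)))) with (Rabs (Rabs (Im (a n)))).
    rewrite Rabs_Rabsolu. apply im_le_Cmod. }
  eapply Rle_trans; [apply Cmod_le_sum|]. unfold Sc; simpl.
  pose proof (Series_Rabs _ HR). pose proof (Series_Rabs _ HI).
  assert (Series (fun n => Rabs (Re (a n))) <= Series (fun n => Cmod (a n))).
  { apply Series_le; [|exact H]. intros n; split; [apply Rabs_pos| apply re_le_Cmod]. }
  assert (Series (fun n => Rabs (Im (a n))) <= Series (fun n => Cmod (a n))).
  { apply Series_le; [|exact H]. intros n; split; [apply Rabs_pos| apply im_le_Cmod]. }
  lra.
Qed.

Lemma cpow_mult x y z : 0 < x -> 0 < y -> cpow (x * y) z = (cpow x z * cpow y z)%C.
Proof.
  intros Hx Hy. unfold cpow. rewrite ln_mult by assumption.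
  rewrite !Rmult_plus_distr_l, exp_plus, cos_plus, sin_plus.
  unfold Cmult; cbn [fst snd]. f_equal; ring.
Qed.

Lemma cpow_shift x z z' r : Re z' = Re z + r -> Im z' = Im z ->
  cpow x z' = (RtoC (exp (r * ln x)) * cpow x z)%C.
Proof.
  intros H1 H2. unfold cpow. rewrite H1, H2.
  rewrite Rmult_plus_distr_r, exp_plus.
  unfold Cmult, RtoC; cbn [fst snd]. f_equal; ring.
Qed.

Lemma Cmod_cpow x z : Cmod (cpow x z) = exp (Re z * ln x).
Proof.
  unfold cpow, Cmod; cbn [fst snd].
  set (e := exp (Re z * ln x)). set (t := Im z * ln x).
  replace ((e * cos t) ^ 2 + (e * sin t) ^ 2) with (e ^ 2) .
  - apply sqrt_pow2. unfold e. left. apply exp_pos.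
  - pose proof (sin2_cos2 t). unfold Rsqr in H. nra.
Qed.

Lemma exp_INR_ln j x : 0 < x -> exp (INR j * ln x) = x ^ j.
Proof. intros Hx. rewrite <- Rpower_pow by assumption. reflexivity. Qed.

Lemma ln_gap x : 1 <= x -> / (x + 1) <= ln (x + 1) - ln x.
Proof.
  intros Hx.
  assert (H := exp_ineq1_le (ln (x / (x + 1)))).
  rewrite exp_ln in H by (apply Rdiv_lt_0_compat; lra).
  rewrite ln_div in H by lra.
  assert (x / (x + 1) = 1 - / (x + 1)) by (field; lra).
  lra.
Qed.

Lemma key_ineq q x : 0 < q -> 1 <= x ->
  exp (- (q + 1) * ln (x + 1)) <= (exp (- q * ln x) - exp (- q * ln (x + 1))) / q.
Proof.
  intros Hq Hx.
  set (L1 := ln x). set (L2 := ln (x + 1)).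
  assert (HL : / (x + 1) <= L2 - L1) by (apply ln_gap; lra).
  assert (E1 : exp (- (q + 1) * L2) = exp (- q * L2) * / (x + 1)).
  { replace (- (q + 1) * L2) with (- q * L2 + - L2) by ring.
    rewrite exp_plus, exp_Ropp. unfold L2. rewrite exp_ln by lra. reflexivity. }
  assert (E2 : exp (- q * L1) = exp (- q * L2) * exp (q * (L2 - L1))).
  { rewrite <- exp_plus. f_equal. ring. }
  assert (E3 := exp_ineq1_le (q * (L2 - L1))).
  assert (P := exp_pos (- q * L2)).
  rewrite E1, E2. apply Rmult_le_reg_l with q; [lra|].
  replace (q * ((exp (- q * L2) * exp (q * (L2 - L1)) - exp (- q * L2)) / q))
    with (exp (- q * L2) * exp (q * (L2 - L1)) - exp (- q * L2)) by (field; lra).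
  assert (q * / (x + 1) <= q * (L2 - L1)) by (apply Rmult_le_compat_l; lra).
  nra.
Qed.

Definition pz (p : R) (n : nat) : R := exp (- p * ln (INR n + 1)).

Lemma pz_pos p n : 0 < pz p n.
Proof. apply exp_pos. Qed.

Lemma pz_partial p n : 1 < p ->
  sum_n (pz p) n <= 1 + (1 - exp (- (p - 1) * ln (INR n + 1))) / (p - 1).
Proof.
  intros Hp. induction n as [|n IH].
  - rewrite sum_O. unfold pz. simpl. rewrite Rplus_0_l, ln_1, !Rmult_0_r, exp_0.
    unfold Rdiv. rewrite Rminus_diag, Rmult_0_l. lra.
  - rewrite sum_Sn. change (plus (sum_n (pz p) n) (pz p (S n))) with (sum_n (pz p) n + pz p (S n)).
    unfold pz at 2. rewrite S_INR.
    pose proof (pos_INR n).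
    pose proof (key_ineq (p - 1) (INR n + 1) ltac:(lra) ltac:(lra)) as K.
    replace (- (p - 1 + 1)) with (- p) in K by ring.
    unfold Rdiv in *. lra.
Qed.

Lemma pz_ex p : 1 < p -> ex_series (pz p).
Proof.
  intros Hp.
  destruct (ex_finite_lim_seq_incr (sum_n (pz p)) (1 + 1 / (p - 1))) as [l Hl].
  - intros n. rewrite sum_Sn. change (plus (sum_n (pz p) n) (pz p (S n))) with (sum_n (pz p) n + pz p (S n)).
    pose proof (pz_pos p (S n)). lra.
  - intros n. eapply Rle_trans; [apply pz_partial; exact Hp|].
    pose proof (exp_pos (- (p - 1) * ln (INR n + 1))).
    unfold Rdiv. apply Rplus_le_compat_l. apply Rmult_le_compat_r.
    + left; apply Rinv_0_lt_compat; lra.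
    + lra.
  - exists l. exact Hl.
Qed.

Lemma Re_opp (z : C) : Re (- z)%C = - Re z.
Proof. reflexivity. Qed.
Lemma Im_opp (z : C) : Im (- z)%C = - Im z.
Proof. reflexivity. Qed.

Lemma cpow_sub x s r : 0 < x ->
  cpow x (- (s - RtoC r))%C = (RtoC (exp (r * ln x)) * cpow x (- s))%C.
Proof.
  intros Hx. apply cpow_shift; destruct s; unfold RtoC; simpl; try ring.
Qed.

Lemma Cmod_cpow_n (s : C) r n : Cmod (cpow (INR n + 1) (- (s - RtoC r))%C) = pz (Re s - r) n.
Proof.
  rewrite Cmod_cpow; unfold pz; f_equal; destruct s; unfold RtoC; simpl; try ring.
Qed.

Lemma zeta_is (s : C) r : 1 < Re s - r ->
  is_series (fun n => cpow (INR n + 1) (- (s - RtoC r))%C) (riemann_zeta (s - RtoC r)%C).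
Proof.
  intros H. apply Sc_correct.
  apply (ex_series_le (V:=C_CompleteNormedModule) _ (pz (Re s - r))).
  - intros n. change (norm ?z) with (Cmod z). rewrite Cmod_cpow_n. apply Rle_refl.
  - apply pz_ex. exact H.
Qed.

Definition aa (s : C) (n : nat) : C := cpow (INR n + 1) (- s).
Definition Ta (s : C) (j : nat) : C := Sc (fun k => aa s (j + k)).

Lemma Cmod_aa s n : Cmod (aa s n) = pz (Re s) n.
Proof. unfold aa. rewrite Cmod_cpow; unfold pz; f_equal; destruct s; simpl; try ring. Qed.

Lemma aa_ex s : 1 < Re s -> ex_series (aa s).
Proof.
  intros H. apply (ex_series_le (V:=C_CompleteNormedModule) _ (pz (Re s))).
  - intros n. change (norm ?z) with (Cmod z). rewrite Cmod_aa. apply Rle_refl.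
  - apply pz_ex. exact H.
Qed.

Lemma Ta_is s j : 1 < Re s -> is_series (fun k => aa s (j + k)) (Ta s j).
Proof.
  intros H. apply Sc_correct. apply (ex_series_incr_n (aa s) j). apply aa_ex; exact H.
Qed.

Lemma Ta_S s j : 1 < Re s -> Ta s j = (aa s j + Ta s (S j))%C.
Proof.
  intros H.
  assert (H1 : is_series (fun k => aa s (j + S k)) (Ta s j - aa s j)%C).
  { assert (E : plus (Ta s j - aa s j)%C (aa s (j + 0)%nat) = Ta s j).
    { rewrite Nat.add_0_r. change (Cplus (Ta s j - aa s j)%C (aa s j) = Ta s j). ring. }
    assert (Hl := Ta_is s j H). rewrite <- E in Hl.
    exact (is_series_incr_1 (fun k => aa s (j + k)) _ Hl). }
  assert (H2 : is_series (fun k => aa s (S j + k)) (Ta s j - aa s j)%C).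
  { eapply is_series_ext; [|exact H1]. intros k. simpl. rewrite <- plus_n_Sm. reflexivity. }
  apply Sc_unique in H2. fold (Ta s (S j)) in H2. rewrite H2. ring.
Qed.

Lemma hz_Ta s k : hurwitz_zeta s (2 * INR (k + 1)) = Ta s (2 * k + 1).
Proof.
  unfold hurwitz_zeta, Ta. change (Sc (fun n => cpow (INR n + 2 * INR (k + 1)) (- s)) = Sc (fun k0 => aa s (2 * k + 1 + k0))).
  apply Sc_ext. intros n. unfold aa. f_equal.
  rewrite !plus_INR, !mult_INR. simpl. ring.
Qed.

Definition S2 (K : nat) : R := (INR K + 1) * (INR K + 2) * (2 * INR K + 3) * / 6.
Definition Ot (s : C) (n : nat) : C := (RtoC ((INR n + 1) ^ 3 - (INR n + 1)) * aa s n)%C.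
Definition Et (s : C) (j : nat) : C :=
  (RtoC (3 * (2 * INR j + 2) ^ 2 + 3 * (2 * INR j + 2)) * aa s (2 * j + 1))%C.
Definition uu (s : C) (k : nat) : C := (RtoC (INR (k + 1)) ^ 2 * hurwitz_zeta s (2 * INR (k + 1)))%C.

Ltac pushC := repeat (rewrite ?RtoC_plus, ?RtoC_minus, ?RtoC_mult, ?RtoC_pow).

Lemma sum_n_C (f : nat -> C) n : sum_n f (S n) = (sum_n f n + f (S n))%C.
Proof. rewrite sum_Sn. reflexivity. Qed.

Lemma Ot_def s n : Ot s n = (RtoC ((INR n + 1) ^ 3 - (INR n + 1)) * aa s n)%C.
Proof. reflexivity. Qed.
Lemma Et_def s j : Et s j =
  (RtoC (3 * (2 * INR j + 2) ^ 2 + 3 * (2 * INR j + 2)) * aa s (2 * j + 1))%C.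
Proof. reflexivity. Qed.
Lemma INR_a K : INR (S K + 1) = INR K + 2.
Proof. rewrite plus_INR, S_INR. simpl. ring. Qed.
Lemma INR_b K : INR (2 * K + 3) = 2 * INR K + 3.
Proof. rewrite plus_INR, mult_INR. simpl. ring. Qed.
Lemma INR_c K : INR (2 * K + 4) = 2 * INR K + 4.
Proof. rewrite plus_INR, mult_INR. simpl. ring. Qed.
Lemma INR_d K : INR (S K) = INR K + 1.
Proof. apply S_INR. Qed.

Lemma partial s K : 1 < Re s ->
  sum_n (uu s) K = (RtoC (S2 K) * Ta s (2 * K + 3) + / 24 * (sum_n (Ot s) (2 * K + 2) + sum_n (Et s) K))%C.
Proof.
  intros Hs. induction K as [|K IH].
  - rewrite sum_O. simpl (2 * 0 + 2)%nat. rewrite !sum_n_C, !sum_O.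
    unfold uu, Ot, Et, S2. rewrite hz_Ta. simpl (2 * 0 + 1)%nat.
    rewrite (Ta_S s 1 Hs), (Ta_S s 2 Hs).
    simpl INR. simpl (2 * 0 + 3)%nat.
    match goal with |- ?a = ?b => change (@eq C a b) end.
    pushC. rewrite RtoC_inv by lra.
    field.
  - rewrite sum_n_C, IH. unfold uu. rewrite hz_Ta.
    replace (2 * S K + 1)%nat with (2 * K + 3)%nat by lia.
    replace (2 * S K + 3)%nat with (S (2 * K + 4))%nat by lia.
    replace (2 * S K + 2)%nat with (S (S (2 * K + 2)))%nat by lia.
    rewrite !sum_n_C.
    rewrite (Ta_S s (2 * K + 3) Hs).
    replace (S (2 * K + 3)) with (2 * K + 4)%nat by lia.
    rewrite (Ta_S s (2 * K + 4) Hs).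
    replace (S (2 * K + 2)) with (2 * K + 3)%nat by lia.
    replace (S (2 * K + 3)) with (2 * K + 4)%nat by lia.
    rewrite (Ot_def s (2 * K + 3)), (Ot_def s (2 * K + 4)), (Et_def s (S K)).
    replace (2 * S K + 1)%nat with (2 * K + 3)%nat by lia.
    unfold S2.
    rewrite (INR_a K), (INR_b K), (INR_c K), (INR_d K).
    match goal with |- ?a = ?b => change (@eq C a b) end.
    set (A3 := aa s (2 * K + 3)). set (A4 := aa s (2 * K + 4)). set (T5 := Ta s (S (2 * K + 4))).
    set (SO := sum_n (Ot s) (2 * K + 2)). set (SE := sum_n (Et s) K).
    set (r := INR K).
    pushC. rewrite RtoC_inv by lra.
    field.
Qed.
Lemma limC_plus (f g : nat -> C) a b :
  filterlim f eventually (locally a) -> filterlim g eventually (locally b) ->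
  filterlim (fun n => (f n + g n)%C) eventually (locally (a + b)%C).
Proof.
  intros Hf Hg.
  exact (filterlim_comp_2 (F:=eventually) f g (fun x y => @plus (NormedModule.AbelianGroup _ C_NormedModule) x y) Hf Hg (filterlim_plus (V:=C_NormedModule) a b)).
Qed.

Lemma limC_scal (f : nat -> C) c a :
  filterlim f eventually (locally a) ->
  filterlim (fun n => (c * f n)%C) eventually (locally (c * a)%C).
Proof.
  intros Hf.
  exact (filterlim_comp_2 (F:=eventually) (G:=@locally (AbsRing_UniformSpace C_AbsRing) c) (fun _ => c) f (fun x y => @scal C_AbsRing C_NormedModule x y)
    (@filterlim_const nat (AbsRing_UniformSpace C_AbsRing) eventually _ c) Hf (filterlim_scal (K:=C_AbsRing) (V:=C_NormedModule) c a)).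
Qed.

Lemma limC_sub (f : nat -> C) a :
  filterlim f eventually (locally a) ->
  filterlim (fun K => f (2 * K + 2)%nat) eventually (locally a).
Proof.
  intros Hf. apply (filterlim_comp _ _ _ (fun K => (2 * K + 2)%nat) f eventually eventually); [|exact Hf].
  intros P [N HN]. exists N. intros n Hn. apply HN. lia.
Qed.

Lemma tail_small p : 1 < p -> forall eps, 0 < eps ->
  exists N, forall j, (N <= j)%nat -> Series (fun k => pz p (j + k)) < eps.
Proof.
  intros Hp eps He.
  assert (Hex := pz_ex p Hp).
  assert (H := Series_correct _ Hex).
  unfold is_series in H.
  pose proof (proj1 (@filterlim_locally nat R_UniformSpace eventually _ (sum_n (pz p)) (Series (pz p))) H (mkposreal eps He)) as H1.
  destruct H1 as [N HN].
  exists (S N). intros j Hj.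
  assert (Hj0 : (0 < j)%nat) by lia.
  pose proof (Series_incr_n (pz p) j Hj0 Hex) as E.
  specialize (HN (pred j) ltac:(lia)).
  rewrite sum_n_Reals in HN.
  unfold ball in HN; simpl in HN. unfold AbsRing_ball, abs, minus, plus, opp in HN; simpl in HN.
  apply Rabs_def2 in HN. simpl in HN. lra.
Qed.

Lemma S2_nonneg K : 0 <= S2 K.
Proof.
  unfold S2. pose proof (pos_INR K).
  apply Rmult_le_pos; [|lra]. apply Rmult_le_pos; [|lra]. apply Rmult_le_pos; lra.
Qed.

Lemma pz_shift3 p m : pz (p - 3) m = (INR m + 1) ^ 3 * pz p m.
Proof.
  unfold pz. pose proof (pos_INR m).
  rewrite <- (exp_INR_ln 3) by lra. rewrite <- exp_plus. f_equal. simpl INR. ring.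
Qed.

Lemma X_bound s K : 4 < Re s ->
  Cmod (RtoC (S2 K) * Ta s (2 * K + 3))%C <= 2 * Series (fun k => pz (Re s - 3) (2 * K + 3 + k)).
Proof.
  intros Hs.
  rewrite Cmod_mult, Cmod_R, Rabs_pos_eq by apply S2_nonneg.
  assert (Hex : ex_series (fun k => pz (Re s) (2 * K + 3 + k))).
  { apply (ex_series_incr_n (pz (Re s))). apply pz_ex. lra. }
  assert (Hex3 : ex_series (fun k => pz (Re s - 3) (2 * K + 3 + k))).
  { apply (ex_series_incr_n (pz (Re s - 3))). apply pz_ex. lra. }
  assert (H1 : Cmod (Ta s (2 * K + 3)) <= 2 * Series (fun k => pz (Re s) (2 * K + 3 + k))).
  { unfold Ta. rewrite <- (Series_ext (fun k => Cmod (aa s (2 * K + 3 + k)))) by (intros; apply Cmod_aa).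
    apply Cmod_Sc. eapply ex_series_ext; [|exact Hex]. intros k. rewrite Cmod_aa. reflexivity. }
  assert (H2 : S2 K * Series (fun k => pz (Re s) (2 * K + 3 + k)) <= Series (fun k => pz (Re s - 3) (2 * K + 3 + k))).
  { rewrite <- Series_scal_l. apply Series_le; [|exact Hex3].
    intros k. split.
    - apply Rmult_le_pos; [apply S2_nonneg| left; apply pz_pos].
    - rewrite pz_shift3. apply Rmult_le_compat_r; [left; apply pz_pos|].
      unfold S2. rewrite plus_INR, plus_INR, mult_INR. simpl (INR 2). simpl (INR 3).
      set (r := INR K). set (t := INR k).
      assert (0 <= r) by apply pos_INR. assert (0 <= t) by apply pos_INR.
      assert (A0 : 0 <= (r + 1) * (r + 2) * (2 * r + 3)).
      { apply Rmult_le_pos; [|lra]. apply Rmult_le_pos; lra. }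
      assert (A1 : (r + 1) * (r + 2) * (2 * r + 3) <= (2 * r + 4) ^ 3).
      { assert (Q1 : (r + 1) * (r + 2) <= (2 * r + 4) * (2 * r + 4)).
        { apply Rmult_le_compat; lra. }
        simpl. rewrite Rmult_1_r, <- Rmult_assoc.
        apply Rmult_le_compat; try lra. apply Rmult_le_pos; lra. }
      assert (A : (r + 1) * (r + 2) * (2 * r + 3) * / 6 <= (2 * r + 4) ^ 3) by lra.
      assert (B : (2 * r + 4) ^ 3 <= ((1 + 1) * r + (1 + 1 + 1) + t + 1) ^ 3).
      { apply pow_incr. lra. }
      lra. }
  pose proof (S2_nonneg K).
  assert (S2 K * Cmod (Ta s (2 * K + 3)) <= S2 K * (2 * Series (fun k => pz (Re s) (2 * K + 3 + k))))
    by (apply Rmult_le_compat_l; assumption).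
  lra.
Qed.

Lemma X_lim s : 4 < Re s ->
  filterlim (fun K => (RtoC (S2 K) * Ta s (2 * K + 3))%C) eventually (locally (RtoC 0)).
Proof.
  intros Hs.
  apply (proj2 (@filterlim_locally nat C_UniformSpace eventually _ _ (RtoC 0))).
  intros eps.
  destruct (tail_small (Re s - 3) ltac:(lra) (eps / 4) ltac:(destruct eps; simpl; lra)) as [N HN].
  exists N. intros K HK.
  apply (norm_compat1 (V:=C_NormedModule)).
  change (norm ?z) with (Cmod z).
  change (minus ?x ?y) with (Cminus x y).
  replace (RtoC (S2 K) * Ta s (2 * K + 3) - RtoC 0)%C with (RtoC (S2 K) * Ta s (2 * K + 3))%C by ring.
  eapply Rle_lt_trans; [apply X_bound; exact Hs|].
  specialize (HN (2 * K + 3)%nat ltac:(lia)).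
  destruct eps; simpl in *. lra.
Qed.

Lemma exp_k_ln (k : nat) x : 0 < x -> exp (INR k * ln x) = x ^ k.
Proof. apply exp_INR_ln. Qed.

Lemma zk s (k : nat) n : cpow (INR n + 1) (- (s - RtoC (INR k)))%C = (RtoC ((INR n + 1) ^ k) * aa s n)%C.
Proof.
  pose proof (pos_INR n).
  rewrite cpow_sub by lra. rewrite exp_k_ln by lra. reflexivity.
Qed.

Lemma Et_eq s j : Et s j =
  (12 * cpow 2 (- s) * cpow (INR j + 1) (- (s - RtoC 2)) + 6 * cpow 2 (- s) * cpow (INR j + 1) (- (s - RtoC 1)))%C.
Proof.
  pose proof (pos_INR j).
  replace (RtoC 2) with (RtoC (INR 2)) by (simpl; f_equal; ring).
  replace (RtoC 1) with (RtoC (INR 1)) by reflexivity.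
  rewrite !zk. unfold Et, aa.
  replace (INR (2 * j + 1) + 1) with (2 * (INR j + 1)) by (rewrite plus_INR, mult_INR; simpl; ring).
  rewrite cpow_mult by lra.
  set (w := cpow 2 (- s)). set (b := cpow (INR j + 1) (- s)). set (r := INR j).
  pushC. simpl. ring.
Qed.

Lemma Ot_eq s n : Ot s n =
  (cpow (INR n + 1) (- (s - RtoC 3)) - cpow (INR n + 1) (- (s - RtoC 1)))%C.
Proof.
  replace (RtoC 3) with (RtoC (INR 3)) by (simpl; f_equal; ring).
  replace (RtoC 1) with (RtoC (INR 1)) by reflexivity.
  rewrite !zk. unfold Ot. pushC. simpl. ring.
Qed.

Lemma cpow_2_1s s : cpow 2 (1 - s) = (2 * cpow 2 (- s))%C.
Proof.
  rewrite (cpow_shift 2 (- s) (1 - s) 1).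
  - rewrite Rmult_1_l, exp_ln by lra. reflexivity.
  - destruct s; simpl; ring.
  - destruct s; simpl; ring.
Qed.

Theorem mainTheorem11 (s : C) (hs : (4 < Re s)%R) :
  is_series
    (fun n : nat => (RtoC (INR (n + 1)) ^ 2 * hurwitz_zeta s (2 * INR (n + 1)))%C)
    (/ 24 * ((3 * cpow 2 (1 - s) - 1) * riemann_zeta (s - 1)
             + 6 * cpow 2 (1 - s) * riemann_zeta (s - 2)
             + riemann_zeta (s - 3)))%C.
Proof.
  assert (Hs1 : 1 < Re s) by lra.
  set (w := cpow 2 (- s)).
  assert (Z1 := zeta_is s 1 ltac:(lra)).
  assert (Z2 := zeta_is s 2 ltac:(lra)).
  assert (Z3 := zeta_is s 3 ltac:(lra)).
  assert (HE : is_series (Et s) (12 * w * riemann_zeta (s - 2) + 6 * w * riemann_zeta (s - 1))%C).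
  { eapply is_series_ext; [intros j; symmetry; apply Et_eq|].
    apply (is_series_plus (V:=C_NormedModule)).
    - apply (is_series_scal (V:=C_NormedModule) (12 * w)%C _ _ Z2).
    - apply (is_series_scal (V:=C_NormedModule) (6 * w)%C _ _ Z1). }
  assert (HO : is_series (Ot s) (riemann_zeta (s - 3) - riemann_zeta (s - 1))%C).
  { eapply is_series_ext; [intros j; symmetry; apply Ot_eq|].
    apply (is_series_minus (V:=C_NormedModule) _ _ _ _ Z3 Z1). }
  unfold is_series.
  replace (/ 24 * ((3 * cpow 2 (1 - s) - 1) * riemann_zeta (s - 1)
             + 6 * cpow 2 (1 - s) * riemann_zeta (s - 2)
             + riemann_zeta (s - 3)))%C
    with (RtoC 0 + / 24 * ((riemann_zeta (s - 3) - riemann_zeta (s - 1))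
           + (12 * w * riemann_zeta (s - 2) + 6 * w * riemann_zeta (s - 1))))%C.
  2: { rewrite cpow_2_1s. fold w. field. }
  eapply filterlim_ext.
  { intros K. symmetry. exact (partial s K Hs1). }
  apply limC_plus.
  - apply X_lim. exact hs.
  - apply limC_scal. apply limC_plus.
    + apply (limC_sub (sum_n (Ot s))). exact HO.
    + exact HE.
Qed.
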